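(* Let $A_1,A_2,B_1,B_2$ be $\{0,1\}$-valued random variables. Suppose a classical probability model for $(A_1,A_2,B_1)$ satisfies $\langle A_1\rangle=\langle A_2\rangle=\langle B_1\rangle=\tfrac12$ and $\langle A_1B_1\rangle=\langle A_2B_1\rangle=\tfrac14+\tfrac{\sqrt2}{8}$. Then in this model $\tfrac{\sqrt2}{4}\le\langle A_1A_2\rangle\le\tfrac12$. Suppose a classical probability model for $(A_1,A_2,B_2)$ satisfies $\langle A_1\rangle=\langle A_2\rangle=\langle B_2\rangle=\tfrac12$, $\langle A_1B_2\rangle=\tfrac14+\tfrac{\sqrt2}{8}$ and $\langle A_2B_2\rangle=\tfrac14-\tfrac{\sqrt2}{8}$. Then in this model $0\le\langle A_1A_2\rangle\le\tfrac12-\tfrac{\sqrt2}{4}$. In particular, since $\tfrac12-\tfrac{\sqrt2}{4}<\tfrac14<\tfrac{\sqrt2}{4}$, no common value of $\langle A_1A_2\rangle$ is possible in the two models.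
   Context: A classical probability model for a finite set of $\{0,1\}$-valued variables is a probability space on which they are realized as indicator functions; $\langle\cdot\rangle$ denotes expectation in that model. The given numbers are the quantum-mechanical predictions for two spin-$1/2$ particles in the singlet state $\tfrac{1}{\sqrt2}(|+-\rangle-|-+\rangle)$, with $A_1=\tfrac{1+\sigma_x}{2}$, $A_2=\tfrac{1+\sigma_z}{2}$ on the first particle and $B_1=\tfrac12-\tfrac{\tau_x+\tau_z}{2\sqrt2}$, $B_2=\tfrac12-\tfrac{\tau_x-\tau_z}{2\sqrt2}$ on the second ($\sigma_i,\tau_i$ Pauli matrices on the first and second particle). *)

(* Defs.v *)
(* A classical probability model for {0,1}-valued
   variables: a probability space (T, P) on which each variable is the
   indicator function \1_E of a measurable event E; <.> is 'E_P. *)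
From HB Require Import structures.
From mathcomp Require Import all_boot all_order all_algebra.
From mathcomp Require Import all_classical all_reals all_analysis.
Set Implicit Arguments. Unset Strict Implicit. Unset Printing Implicit Defensive.

(* Main.v *)
Require Import Defs.
From HB Require Import structures.
From mathcomp Require Import all_boot all_order all_algebra.
From mathcomp Require Import all_classical all_reals all_analysis.
From mathcomp Require Import ring lra.
Set Implicit Arguments. Unset Strict Implicit.
Import Order.TTheory GRing.Theory Num.Theory.
Local Open Scope classical_set_scope.
Local Open Scope ring_scope.

Section pr.
Context (R : realType) (d : measure_display) (T : measurableType d) (P : probability T R).
Definition pr (X : set T) : R := fine (P X).
Lemma prE X : measurable X -> P X = (pr X)%:E.
Proof. by move=> mX; rewrite /pr fineK // fin_num_measure. Qed.
Lemma pr_ge0 X : measurable X -> 0 <= pr X.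
Proof. by move=> mX; rewrite -lee_fin -prE. Qed.
Lemma pr_le1 X : measurable X -> pr X <= 1.
Proof. by move=> mX; rewrite -lee_fin -prE // probability_le1. Qed.
Lemma pr_le X Y : measurable X -> measurable Y -> X `<=` Y -> pr X <= pr Y.
Proof. by move=> mX mY XY; rewrite -lee_fin -!prE // le_measure ?inE. Qed.
Lemma pr_UI X Y : measurable X -> measurable Y -> pr (X `|` Y) + pr (X `&` Y) = pr X + pr Y.
Proof.
move=> mX mY.
have := @measureUfinr _ _ _ P _ _ mX mY.
rewrite ltey_eq fin_num_measure // => /(_ isT).
move=> H.
have mI := measurableI _ _ mX mY.
have mU := measurableU _ _ mX mY.
have H' : (pr (X `|` Y))%:E = (pr X + pr Y - pr (X `&` Y))%:E.
  rewrite EFinB EFinD -(prE mU) -(prE mX) -(prE mY) -(prE mI).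
  exact: H.
have := EFin_inj H'; move=> ->; ring.
Qed.
Lemma E_ind X : measurable X -> ('E_P[\1_X] = (pr X)%:E)%E.
Proof. by move=> mX; rewrite expectation_indic // prE. Qed.
Lemma E_ind2 X Y : measurable X -> measurable Y ->
  ('E_P[fun w => (\1_X w * \1_Y w)%R] = (pr (X `&` Y))%:E)%E.
Proof.
move=> mX mY; have -> : (fun w => (\1_X w * \1_Y w)%R) = \1_(X `&` Y) :> (T -> R).
  by rewrite indicI.
by rewrite E_ind //; exact: measurableI.
Qed.
End pr.
Section X.
Context (R : realType).
Lemma sq2 : (1 < Num.sqrt 2 :> R).
Proof.
have h0 : 0 <= Num.sqrt 2 :> R by exact: sqrtr_ge0.
have h2 : Num.sqrt 2 ^+ 2 = 2 :> R by rewrite sqr_sqrtr.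
rewrite expr2 in h2; nra.
Qed.
End X.

Lemma model1 (R : realType) (d : measure_display) (T : measurableType d) (P : probability T R)
     (A1 A2 B1 : set T) :
     measurable A1 -> measurable A2 -> measurable B1 ->
     ('E_P[\1_A1] = (1 / 2)%:E)%E ->
     ('E_P[\1_A2] = (1 / 2)%:E)%E ->
     ('E_P[\1_B1] = (1 / 2)%:E)%E ->
     ('E_P[fun w => (\1_A1 w * \1_B1 w)%R] = (1 / 4 + Num.sqrt 2 / 8)%:E)%E ->
     ('E_P[fun w => (\1_A2 w * \1_B1 w)%R] = (1 / 4 + Num.sqrt 2 / 8)%:E)%E ->
     ((Num.sqrt 2 / 4)%:E <= 'E_P[fun w => (\1_A1 w * \1_A2 w)%R] <= (1 / 2)%:E)%E.
Proof.
move=> m1 m2 mB.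
rewrite !E_ind // !E_ind2 // => e1 e2 eB e1B e2B.
have h1 := EFin_inj e1; have h2 := EFin_inj e2; have hB := EFin_inj eB.
have h1B := EFin_inj e1B; have h2B := EFin_inj e2B.
have mI := measurableI _ _ m1 m2.
have m1B := measurableI _ _ m1 mB.
have m2B := measurableI _ _ m2 mB.
have := pr_UI P m1B m2B.
have := pr_le P (measurableU _ _ m1B m2B) mB (fun x => ltac:(by case=> -[])).
have := pr_le P (measurableI _ _ m1B m2B) mI (fun x => ltac:(by move=> [[? ?] [? ?]])).
have := pr_le P mI m1 (@subIsetl _ _ _).
rewrite !lee_fin => *; apply/andP; split; lra.
Qed.

Lemma model2 (R : realType) (d : measure_display) (T : measurableType d) (P : probability T R)
     (A1 A2 B2 : set T) :
     measurable A1 -> measurable A2 -> measurable B2 ->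
     ('E_P[\1_A1] = (1 / 2)%:E)%E ->
     ('E_P[\1_A2] = (1 / 2)%:E)%E ->
     ('E_P[\1_B2] = (1 / 2)%:E)%E ->
     ('E_P[fun w => (\1_A1 w * \1_B2 w)%R] = (1 / 4 + Num.sqrt 2 / 8)%:E)%E ->
     ('E_P[fun w => (\1_A2 w * \1_B2 w)%R] = (1 / 4 - Num.sqrt 2 / 8)%:E)%E ->
     (0%:E <= 'E_P[fun w => (\1_A1 w * \1_A2 w)%R] <= (1 / 2 - Num.sqrt 2 / 4)%:E)%E.
Proof.
move=> m1 m2 mB.
rewrite !E_ind // !E_ind2 // => e1 e2 eB e1B e2B.
have h1 := EFin_inj e1; have h2 := EFin_inj e2; have hB := EFin_inj eB.
have h1B := EFin_inj e1B; have h2B := EFin_inj e2B.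
have mI := measurableI _ _ m1 m2.
have mC := measurableC mB.
have m1B := measurableI _ _ m1 mB.
have m2B := measurableI _ _ m2 mB.
have m1C := measurableI _ _ m1 mC.
have := pr_UI P m2B m1C.
have := pr_UI P m1B m1C.
have := pr_ge0 P (measurableI _ _ m2B m1C).
have := pr_le P (measurableU _ _ m1B m1C) m1
  (fun x => ltac:(by case=> -[])).
have := pr_le P (measurableI _ _ m1B m1C) measurable0
  (fun x => ltac:(by move=> [[? ?] [? ?]])).
have := pr_le P mI (measurableU _ _ m2B m1C)
  (fun x => ltac:(move=> [h h']; have [hb|hb] := pselect (B2 x); [left|right]; by [])).
have := pr_ge0 P mI.
have -> : pr P set0 = 0 by rewrite /pr measure0.
rewrite !lee_fin => *; apply/andP; split; lra.
Qed.

Theorem mainTheorem2 (R : realType) :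
  (* model for (A1, A2, B1) *)
  (forall (d : measure_display) (T : measurableType d) (P : probability T R)
     (A1 A2 B1 : set T),
     measurable A1 -> measurable A2 -> measurable B1 ->
     ('E_P[\1_A1] = (1 / 2)%:E)%E ->
     ('E_P[\1_A2] = (1 / 2)%:E)%E ->
     ('E_P[\1_B1] = (1 / 2)%:E)%E ->
     ('E_P[fun w => (\1_A1 w * \1_B1 w)%R] = (1 / 4 + Num.sqrt 2 / 8)%:E)%E ->
     ('E_P[fun w => (\1_A2 w * \1_B1 w)%R] = (1 / 4 + Num.sqrt 2 / 8)%:E)%E ->
     ((Num.sqrt 2 / 4)%:E <= 'E_P[fun w => (\1_A1 w * \1_A2 w)%R] <= (1 / 2)%:E)%E)
  /\
  (* model for (A1, A2, B2) *)
  (forall (d : measure_display) (T : measurableType d) (P : probability T R)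
     (A1 A2 B2 : set T),
     measurable A1 -> measurable A2 -> measurable B2 ->
     ('E_P[\1_A1] = (1 / 2)%:E)%E ->
     ('E_P[\1_A2] = (1 / 2)%:E)%E ->
     ('E_P[\1_B2] = (1 / 2)%:E)%E ->
     ('E_P[fun w => (\1_A1 w * \1_B2 w)%R] = (1 / 4 + Num.sqrt 2 / 8)%:E)%E ->
     ('E_P[fun w => (\1_A2 w * \1_B2 w)%R] = (1 / 4 - Num.sqrt 2 / 8)%:E)%E ->
     (0%:E <= 'E_P[fun w => (\1_A1 w * \1_A2 w)%R] <= (1 / 2 - Num.sqrt 2 / 4)%:E)%E)
  /\
  (* in particular: 1/2 - sqrt2/4 < 1/4 < sqrt2/4, so no common value *)
  (1 / 2 - Num.sqrt 2 / 4 < (1 / 4 : R) < Num.sqrt 2 / 4)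
  /\
  (forall (d : measure_display) (T : measurableType d) (P : probability T R)
     (A1 A2 B1 : set T)
     (d' : measure_display) (T' : measurableType d') (P' : probability T' R)
     (A1' A2' B2' : set T'),
     measurable A1 -> measurable A2 -> measurable B1 ->
     ('E_P[\1_A1] = (1 / 2)%:E)%E ->
     ('E_P[\1_A2] = (1 / 2)%:E)%E ->
     ('E_P[\1_B1] = (1 / 2)%:E)%E ->
     ('E_P[fun w => (\1_A1 w * \1_B1 w)%R] = (1 / 4 + Num.sqrt 2 / 8)%:E)%E ->
     ('E_P[fun w => (\1_A2 w * \1_B1 w)%R] = (1 / 4 + Num.sqrt 2 / 8)%:E)%E ->
     measurable A1' -> measurable A2' -> measurable B2' ->
     ('E_P'[\1_A1'] = (1 / 2)%:E)%E ->
     ('E_P'[\1_A2'] = (1 / 2)%:E)%E ->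
     ('E_P'[\1_B2'] = (1 / 2)%:E)%E ->
     ('E_P'[fun w => (\1_A1' w * \1_B2' w)%R] = (1 / 4 + Num.sqrt 2 / 8)%:E)%E ->
     ('E_P'[fun w => (\1_A2' w * \1_B2' w)%R] = (1 / 4 - Num.sqrt 2 / 8)%:E)%E ->
     ('E_P[fun w => (\1_A1 w * \1_A2 w)%R] <> 'E_P'[fun w => (\1_A1' w * \1_A2' w)%R])%E).
Proof.
have s1 := sq2 R.
split; first exact: model1.
split; first exact: model2.
split; first by apply/andP; split; lra.
move=> d T P A1 A2 B1 d' T' P' A1' A2' B2' m1 m2 mB e1 e2 eB e1B e2B m1' m2' mB' e1' e2' eB' e1B' e2B' E.
have := model1 m1 m2 mB e1 e2 eB e1B e2B.
have := model2 m1' m2' mB' e1' e2' eB' e1B' e2B'.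
rewrite E E_ind2 // !lee_fin => /andP[_ h] /andP[h' _]; lra.
Qed.
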